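(* Let $n, r, d$ be positive integers with $n\geqslant r+1$ and $d\geqslant2$. Then $\mathcal{A}_r^d$ is a percolating set of $K_n^d$ in the $r$-neighbor bootstrap percolation process.
   Context: All graphs are finite, simple and undirected. For a nonnegative integer $r$ and a graph $G$, the $r$-neighbor bootstrap percolation process on $G$ starts with a set $A_0\subseteq V(G)$ of initially active vertices, and for $i\geqslant 1$, $A_i=A_{i-1}\cup\{v\in V(G) : |N(v)\cap A_{i-1}|\geqslant r\}$. The set $A_0$ is a percolating set if $\bigcup_{i\geqslant 0}A_i=V(G)$. $K_n^d$ has vertex set $[\![n]\!]^d$, where $[\![n]\!]=\{0,1,\ldots,n-1\}$, and two vertices are adjacent iff they differ in exactly one coordinate. For $t=(t_1,\ldots,t_d)\in\{0,1\}^d$ and $P\subseteq[\![n]\!]^d$, let $P(t)$ be the set of $(x_1,\ldots,x_d)\in[\![n]\!]^d$ for which there is $(p_1,\ldots,p_d)\in P$ with $x_i=t_i(n-1-p_i)+(1-t_i)p_i$ for all $i$. Let $A_r^d=\{(x_1,\ldots,x_d)\in[\![n]\!]^d : \sum_{i=1}^d x_i\leqslant\lceil r/2\rceil-1\}$, let $T=\{(t_1,\ldots,t_d)\in\{0,1\}^d : t_1=t_2\}$, and $\mathcal{A}_r^d=\bigcup_{t\in T}A_r^d(t)$. *)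

(* Defs.v *)
From mathcomp Require Import all_boot.
Set Implicit Arguments. Unset Strict Implicit. Unset Printing Implicit Defensive.

Definition vertex (n d : nat) := {ffun 'I_d -> 'I_n}.

Definition Kadj (n d : nat) (x y : vertex n d) : bool :=
  #|[set i : 'I_d | x i != y i]| == 1.

Definition nbhd (n d : nat) (v : vertex n d) : {set vertex n d} :=
  [set u | Kadj v u].

Definition bp_step (n d r : nat) (A : {set vertex n d}) : {set vertex n d} :=
  A :|: [set v | r <= #|nbhd v :&: A|].

Definition bp_iter (n d r : nat) (A0 : {set vertex n d}) (i : nat) :
  {set vertex n d} := iter i (@bp_step n d r) A0.

Definition percolating (n d r : nat) (A0 : {set vertex n d}) : Prop :=
  forall v : vertex n d, exists i : nat, v \in bp_iter r A0 i.

Definition reflect_by (n d : nat) (t : {ffun 'I_d -> bool}) (p : vertex n d)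
  : vertex n d := [ffun i => if t i then rev_ord (p i) else p i].

Definition refl_set (n d : nat) (P : {set vertex n d}) (t : {ffun 'I_d -> bool})
  : {set vertex n d} := [set x | [exists p in P, x == reflect_by t p]].

Definition A_rd (n d r : nat) : {set vertex n d} :=
  [set x : vertex n d | \sum_(i < d) (x i : nat) <= uphalf r - 1].

(* T = { t in {0,1}^d : t_1 = t_2 }  (coordinates 1,2 are indices 0,1). *)
Definition Tset (d : nat) : {set {ffun 'I_d -> bool}} :=
  [set t : {ffun 'I_d -> bool} | [forall i : 'I_d, forall j : 'I_d,
              ((val i == 0) && (val j == 1)) ==> (t i == t j)]].

Definition calA (n d r : nat) : {set vertex n d} :=
  \bigcup_(t in Tset d) refl_set (A_rd n d r) t.

(* Main.v *)
Require Import Defs.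
From mathcomp Require Import all_boot zify.

Lemma uphalf_bounds r : r <= uphalf r + uphalf r <= r + 1.
Proof. rewrite uphalfE -divn2. lia. Qed.

Lemma nb0 (b : bool) : ~~ b -> nat_of_bool b = 0. Proof. by case: b. Qed.
Lemma nb1 (b : bool) : b -> nat_of_bool b = 1. Proof. by case: b. Qed.

Lemma sum_int n a b : a <= b <= n -> \sum_(0 <= i < n) (a <= i < b) = b - a.
Proof.
move=> /andP [hab hbn].
rewrite (big_cat_nat _ (n:=a)) //=; last by lia.
rewrite (big_cat_nat _ (m:=a) (n:=b)) //=.
rewrite (eq_big_nat _ _ (F2 := fun _ => 0)); last by move=> i hi; apply: nb0; lia.
rewrite [X in _ + (_ + X)](eq_big_nat _ _ (F2 := fun _ => 0)); last by move=> i hi; apply: nb0; lia.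
rewrite [X in _ + (X + _)](eq_big_nat _ _ (F2 := fun _ => 1)); last by move=> i hi; apply: nb1; lia.
by rewrite !sum_nat_const_nat; lia.
Qed.

Lemma cnt2 n (f : nat -> bool) a1 b1 a2 b2 :
  a1 <= b1 -> b1 <= a2 -> a2 <= b2 -> b2 <= n ->
  (forall i, i < n -> (a1 <= i < b1) || (a2 <= i < b2) -> f i) ->
  (b1 - a1) + (b2 - a2) <= \sum_(0 <= i < n) f i.
Proof.
move=> h1 h2 h3 h4 hf.
rewrite -(@sum_int n a1 b1); last by lia.
rewrite -(@sum_int n a2 b2); last by lia.
rewrite -big_split /= big_nat_cond [X in _ <= X]big_nat_cond; apply: leq_sum => i /andP [/andP [_ hi] _].
have := hf i hi.
case: (a1 <= i < b1) / idP => h; case: (a2 <= i < b2) / idP => h' /=; try lia; by move=> ->.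
Qed.


Definition rc n (P : nat -> nat -> bool) x y := \sum_(0 <= i < n) ((i != x) && P i y).
Definition cc n (P : nat -> nat -> bool) x y := \sum_(0 <= i < n) ((i != y) && P x i).

Lemma rowk n r (P : nat -> nat -> bool) k :
 0 < r -> r + 1 <= n ->
 (forall x y, x < n -> y < n -> r <= rc n P x y + cc n P x y -> P x y) ->
 (forall x y, x < n -> y < n -> x + y < uphalf r -> P x y) ->
 (forall x y, x < n -> y < n -> (n-1-x) + (n-1-y) < uphalf r -> P x y) ->
 (forall x y, x < n -> y < n -> (y < k) || (n-1-k < y) -> P x y) ->
 k < uphalf r ->
 forall x, x < n -> P x k.
Proof.
move=> hr hn Hcl H0 H1 Hk hkc.
have hc := uphalf_bounds r. move: hc hkc H0 H1. set c := uphalf r => hc hkc H0 H1.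
have sweep : forall j, j <= c - k -> forall j', j' < j -> P (n-1-j') k.
  elim => [|j IH] hj j' hj'; first by [].
  have [lt|ge] := ltnP j' j; first by apply: IH; lia.
  have -> : j' = j by lia.
  apply: Hcl; [lia|lia|].
  have h1 : (c - k - 0) + (n - (n - j)) <= rc n P (n-1-j) k.
    rewrite /rc; apply: cnt2; try lia.
    move=> i hi /orP [] hi'; apply/andP; split; try (apply/eqP; lia).
    - apply: H0; lia.
    - have -> : i = n-1-(n-1-i) by lia.
      apply: IH; lia.
  have h2 : (k - 0) + (n - (n - c + j)) <= cc n P (n-1-j) k.
    rewrite /cc; apply: cnt2; try lia.
    move=> i hi /orP [] hi'; apply/andP; split; try (apply/eqP; lia).
    - apply: Hk; lia.
    - apply: H1; lia.
  lia.
move=> x hx.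
case: (ltnP x (c-k)) => hx1; first by apply: H0; lia.
case: (leqP (n - (c-k)) x) => hx2.
  have -> : x = n-1-(n-1-x) by lia.
  apply: (sweep (c-k)); lia.
apply: Hcl; [lia|lia|].
have h1 : (c - k - 0) + (n - (n - c + k)) <= rc n P x k.
  rewrite /rc; apply: cnt2; try lia.
  move=> i hi /orP [] hi'; apply/andP; split; try (apply/eqP; lia).
  - apply: H0; lia.
  - have -> : i = n-1-(n-1-i) by lia.
    apply: (sweep (c-k)); lia.
have h2 : (k - 0) + (n - (n - k)) <= cc n P x k.
  rewrite /cc; apply: cnt2; try lia.
  move=> i hi /orP [] hi'; apply/andP; split; try (apply/eqP; lia).
  - apply: Hk; lia.
  - apply: Hk; lia.
lia.
Qed.

Lemma sum_rev n (f g : nat -> bool) :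
  (forall i, i < n -> f i = g (n-1-i)) ->
  \sum_(0 <= i < n) f i = \sum_(0 <= i < n) g i.
Proof.
move=> hfg; rewrite [RHS]big_nat_rev /=.
apply: eq_big_nat => i /andP [_ hi].
rewrite hfg //; congr (nat_of_bool (g _)); lia.
Qed.

Lemma two_d n r (P : nat -> nat -> bool) :
 0 < r -> r + 1 <= n ->
 (forall x y, x < n -> y < n -> r <= rc n P x y + cc n P x y -> P x y) ->
 (forall x y, x < n -> y < n -> x + y < uphalf r -> P x y) ->
 (forall x y, x < n -> y < n -> (n-1-x) + (n-1-y) < uphalf r -> P x y) ->
 forall x y, x < n -> y < n -> P x y.
Proof.
move=> hr hn Hcl H0 H1.
have hc := uphalf_bounds r.
have main : forall k x y, x < n -> y < n -> (y < k) || (n-1-k < y) -> P x y.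
  elim=> [|k IH] x y hx hy hk; first by exfalso; lia.
  case: ((y < k) || (n-1-k < y)) / idP => h; first by apply: IH.
  case: (leqP r (k+k)) => hrk.
    apply: Hcl => //.
    have h2 : (k - 0) + (n - (n - k)) <= cc n P x y.
      rewrite /cc; apply: cnt2; try lia.
      move=> i hi /orP [] hi'; apply/andP; split; try (apply/eqP; lia).
      - apply: IH; lia.
      - apply: IH; lia.
    lia.
  have hkc : k < uphalf r by lia.
  case: (y =P k) => [->|hyk].
    exact: (@rowk n r P k hr hn Hcl H0 H1 IH hkc x hx).
  have -> : y = n-1-k by lia.
  pose P' x y := P (n-1-x) (n-1-y).
  have := @rowk n r P' k hr hn _ _ _ _ hkc (n-1-x).
  rewrite /P' (_ : n-1-(n-1-x) = x); last by lia.
  apply; try lia.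
  - move=> x' y' hx' hy'.
    have -> : rc n P' x' y' = rc n P (n-1-x') (n-1-y').
      rewrite /rc; apply: sum_rev => i hi.
      rewrite /P'.
      have e : (i == x') = (n-1-i == n-1-x') by apply/eqP/eqP; lia.
      by rewrite e.
    have -> : cc n P' x' y' = cc n P (n-1-x') (n-1-y').
      rewrite /cc; apply: sum_rev => i hi.
      rewrite /P'.
      have e : (i == y') = (n-1-i == n-1-y') by apply/eqP/eqP; lia.
      by rewrite e.
    move=> hh; apply: Hcl => //; lia.
  - move=> x' y' hx' hy' hs; apply: H1; lia.
  - move=> x' y' hx' hy' hs; apply: H0; lia.
  - move=> x' y' hx' hy' hs; apply: IH; lia.
move=> x y hx hy; apply: (main n) => //; lia.
Qed.

Set Implicit Arguments. Unset Strict Implicit. Unset Printing Implicit Defensive.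

Definition upd (n d : nat) (w : vertex n d) (i : 'I_d) (b : 'I_n) : vertex n d :=
  [ffun j => if j == i then b else w j].

Lemma upd_same n d (w : vertex n d) i b : upd w i b i = b.
Proof. by rewrite /upd ffunE eqxx. Qed.

Lemma upd_other n d (w : vertex n d) i j b : j != i -> upd w i b j = w j.
Proof. by rewrite /upd ffunE => /negbTE ->. Qed.

Lemma Kadj_upd n d (w : vertex n d) i b : b != w i -> Kadj w (upd w i b).
Proof.
move=> hb; rewrite /Kadj.
have -> : [set j : 'I_d | w j != upd w i b j] = [set i].
  apply/setP => j; rewrite !inE /upd ffunE.
  case: (j =P i) => [->|_]; first by rewrite eq_sym hb.
  by rewrite eqxx.
by rewrite cards1.
Qed.

Lemma nb_count n d (S : {set vertex n d}) (w : vertex n d) :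
  \sum_(i < d) \sum_(b < n) ((b != w i) && (upd w i b \in S)) <= #|nbhd w :&: S|.
Proof.
set P := [set p : 'I_d * 'I_n | (p.2 != w p.1) && (upd w p.1 p.2 \in S)].
have -> : \sum_(i < d) \sum_(b < n) ((b != w i) && (upd w i b \in S)) = #|P|.
  rewrite pair_big /= -sum1_card [RHS]big_mkcond /=.
  by apply: eq_bigr => p _; rewrite inE; case: (_ && _).
have inj : {in P &, injective (fun p : 'I_d * 'I_n => upd w p.1 p.2)}.
  move=> [i b] [i' b']; rewrite !inE /= => /andP [hb _] /andP [hb' _] e.
  have hi : i' = i.
    apply/eqP; apply/negPn/negP => ne.
    move: (congr1 (fun f : vertex n d => f i) e); rewrite /= upd_same upd_other; last by rewrite eq_sym.
    by move=> h; rewrite h eqxx in hb.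
  subst i'; congr (_, _).
  by move: (congr1 (fun f : vertex n d => f i) e); rewrite /= !upd_same.
have hc : #|[set upd w p.1 p.2 | p in P]| = #|P| := card_in_imset inj.
rewrite -hc; apply: subset_leq_card.
apply/subsetP => x /imsetP [[i b] hp ->]; move: hp; rewrite in_set => /andP [hb hS].
by rewrite in_setI hS andbT /nbhd in_set; apply: Kadj_upd.
Qed.


Lemma closure_set n d r (A0 : {set vertex n d}) : exists S : {set vertex n d},
  [/\ A0 \subset S, (forall w, r <= #|nbhd w :&: S| -> w \in S)
    & (forall v, v \in S -> exists i, v \in bp_iter r A0 i)].
Proof.
pose F := fun X : {set vertex n d} => bp_step r (A0 :|: X).
have step_mono : forall A B : {set vertex n d}, A \subset B -> bp_step r A \subset bp_step r B.
  move=> A B hAB; apply/subsetP => x; rewrite /bp_step !in_setU => /orP [hx|hx]; apply/orP.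
    by left; exact: (subsetP hAB).
  right; move: hx; rewrite !in_set => hx; apply: leq_trans hx _; apply: subset_leq_card; exact: setIS.
have Fmono : {homo F : X Y / X \subset Y}.
  by move=> X Y h; apply: step_mono; apply: setUS.
have fk := fixsetK Fmono.
have A0iter : forall i, A0 \subset bp_iter r A0 i.
  elim=> [|i IH]; first exact: subxx.
  apply: subset_trans IH _.
  by apply/subsetP => x hx; rewrite /bp_iter iterS /bp_step in_setU hx.
exists (fixset F); split.
- rewrite -fk; apply/subsetP => x hx; by rewrite /F /bp_step !in_setU hx.
- move=> w hw; rewrite -fk /F /bp_step in_setU; apply/orP; right; rewrite in_set.
  apply: leq_trans hw _; apply: subset_leq_card; apply: setIS; exact: subsetUr.
- move=> v hv; exists #|vertex n d|.
  have h : forall k, iter k F set0 \subset bp_iter r A0 k.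
    elim=> [|k IH]; first exact: sub0set.
    rewrite iterS /bp_iter iterS.
    apply: subset_trans (Fmono _ _ IH) _.
    rewrite /F (setUidPr (A0iter k)); exact: subxx.
  by apply: (subsetP (h _)); move: hv; rewrite /fixset.
Qed.


Section G.
Variables (n d : nat) (S : {set vertex n d}).

Definition lc (w : vertex n d) (i : 'I_d) := \sum_(b < n) ((b != w i) && (upd w i b \in S)).
Definition agree m (v w : vertex n d) := forall i : 'I_d, m <= i -> w i = v i.
Definition refln (b : bool) (x : 'I_n) : nat := if b then n - 1 - x else x.
Definition inslice m r (w : vertex n d) := exists t : 'I_d -> bool,
  (forall i j : 'I_d, val i = 0 -> val j = 1 -> t i = t j) /\
  \sum_(i < d | i < m) refln (t i) (w i) < uphalf r.
Definition Gstmt m := forall r (v : vertex n d), 0 < r -> r + 1 <= n ->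
  (forall w, agree m v w -> r <= \sum_(i < d | i < m) lc w i -> w \in S) ->
  (forall w, agree m v w -> inslice m r w -> w \in S) -> v \in S.

Definition ordf (f : 'I_n -> bool) (i : nat) : bool := [exists b : 'I_n, (val b == i) && f b].
Lemma ordf_val f (b : 'I_n) : ordf f b = f b.
Proof.
apply/existsP/idP => [[b' /andP [/eqP e h]]|h].
  by have -> : b = b' by apply: val_inj.
by exists b; rewrite eqxx h.
Qed.
Lemma sum_ordf (f : 'I_n -> bool) : \sum_(b < n) f b = \sum_(0 <= i < n) ordf f i.
Proof. by rewrite big_mkord; apply: eq_bigr => b _; rewrite ordf_val. Qed.

Lemma G2 : 2 <= d -> Gstmt 2.
Proof.
move=> hd r v hr hn Hcl Hin.
have h0 : 0 < d by lia.
have h1 : 1 < d by lia.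
pose i0 := Ordinal h0; pose i1 := Ordinal h1.
have ne01 : i0 != i1 by [].
pose W (a b : 'I_n) := upd (upd v i0 a) i1 b.
have W0 a b : W a b i0 = a by rewrite /W upd_other // upd_same.
have W1 a b : W a b i1 = b by rewrite /W upd_same.
have Wo a b (i : 'I_d) : 2 <= i -> W a b i = v i.
  move=> hi; rewrite /W !upd_other //; apply/eqP => e; rewrite e /= in hi; lia.
have agW a b : agree 2 v (W a b) by move=> i hi; apply: Wo.
have sum2 : forall F : 'I_d -> nat, \sum_(i < d | i < 2) F i = F i0 + F i1.
  move=> F; rewrite (bigD1 i0) //= (bigD1 i1) //= big1 ?addn0 //.
  move=> i /andP [/andP [hi2 hi0] hi1]; exfalso.
  have : nat_of_ord i = 0 \/ nat_of_ord i = 1 by lia.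
  case=> e; [move: hi0 | move: hi1]; apply/negP; rewrite negbK; apply/eqP; exact: val_inj.
pose P x y := [exists a : 'I_n, exists b : 'I_n, [&& val a == x, val b == y & W a b \in S]].
have PW (a b : 'I_n) : P a b = (W a b \in S).
  apply/existsP/idP => [[a' /existsP [b' /and3P [/eqP ea /eqP eb h]]]|h].
    have -> : a = a' by apply: val_inj.
    by have -> : b = b' by apply: val_inj.
  by exists a; apply/existsP; exists b; rewrite !eqxx h.
have upd0 a b a' : upd (W a b) i0 a' = W a' b.
  apply/ffunP => j; rewrite /W !ffunE.
  case: (j =P i0) => [->|_]; first by rewrite (negbTE ne01).
  by case: (j =P i1).
have upd1 a b b' : upd (W a b) i1 b' = W a b'.
  apply/ffunP => j; rewrite /W !ffunE.
  by case: (j =P i1).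
have lc0 (a b : 'I_n) : lc (W a b) i0 = rc n P a b.
  rewrite /lc W0 /rc big_mkord; apply: eq_bigr => a' _.
  by rewrite upd0 -PW.
have lc1 (a b : 'I_n) : lc (W a b) i1 = cc n P a b.
  rewrite /lc W1 /cc big_mkord; apply: eq_bigr => b' _.
  by rewrite upd1 -PW.
have := @two_d n r P hr hn _ _ _ (v i0) (v i1) (ltn_ord _) (ltn_ord _).
rewrite PW (_ : W (v i0) (v i1) = v); last first.
  apply/ffunP => j; rewrite /W !ffunE.
  case: (j =P i1) => [->|_] //; by case: (j =P i0) => [->|_].
apply.
- move=> x y hx hy hh.
  have -> : P x y = P (Ordinal hx) (Ordinal hy) by [].
  rewrite PW; apply: Hcl (agW _ _) _.
  by rewrite sum2 lc0 lc1.
- move=> x y hx hy hs.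
  have -> : P x y = P (Ordinal hx) (Ordinal hy) by [].
  rewrite PW; apply: Hin (agW _ _) _.
  exists (fun _ => false); split => //.
  by rewrite sum2 /refln W0 W1 /=.
- move=> x y hx hy hs.
  have -> : P x y = P (Ordinal hx) (Ordinal hy) by [].
  rewrite PW; apply: Hin (agW _ _) _.
  exists (fun _ => true); split => //.
  by rewrite sum2 /refln W0 W1 /=.
Qed.

Lemma Gstep m : 2 <= m -> m < d -> Gstmt m -> Gstmt m.+1.
Proof.
move=> hm hmd IHm r v hr hn Hcl Hin.
pose j := Ordinal hmd.
have hc := uphalf_bounds r.
have sumS : forall F : 'I_d -> nat,
    \sum_(i < d | i < m.+1) F i = \sum_(i < d | i < m) F i + F j.
  move=> F; rewrite (bigD1 j) /=; last exact: ltnSn.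
  rewrite addnC; congr (_ + _); apply: eq_bigl => i.
  have e : (i == j) = (nat_of_ord i == m) by [].
  rewrite e; apply/idP/idP.
    by move=> /andP [h1 /eqP h2]; lia.
  by move=> h; apply/andP; split; [lia | apply/eqP; lia].
have line : forall k (w' : vertex n d), agree m.+1 v w' -> minn (w' j) (n - 1 - w' j) = k ->
    (forall w'', agree m.+1 v w'' -> minn (w'' j) (n - 1 - w'' j) < k -> w'' \in S) ->
    k + k <= lc w' j.
  move=> k w' ha hmu IH.
  rewrite /lc (sum_ordf (fun b => (b != w' j) && (upd w' j b \in S))).
  have hwj := ltn_ord (w' j).
  apply: leq_trans (@cnt2 n _ 0 k (n-k) n _ _ _ _ _); [lia|lia|lia|lia|lia|].
  move=> i hi hi'.
  suff : ordf (fun b => (b != w' j) && (upd w' j b \in S)) (Ordinal hi) by [].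
  rewrite ordf_val; apply/andP; split.
    apply/eqP => e; have := hmu; rewrite -e /=; lia.
  apply: IH.
    move=> i' hi2; rewrite upd_other; first exact: ha.
    by apply/eqP => e; rewrite e /= in hi2; lia.
  rewrite upd_same /=; lia.
have claim : forall k (w : vertex n d), agree m.+1 v w -> minn (w j) (n - 1 - w j) < k -> w \in S.
  elim=> [|k IHk] w hw hk; first by [].
  have [lt|ge] := ltnP (minn (w j) (n - 1 - w j)) k; first exact: IHk.
  have hmu : minn (w j) (n - 1 - w j) = k by lia.
  have hl := line k w hw hmu IHk.
  case: (leqP r (k+k)) => hrk.
    by apply: Hcl hw _; rewrite sumS; lia.
  have ag : forall w', agree m w w' -> agree m.+1 v w'.
    move=> w' hw' i hi; rewrite hw'; [exact: hw | lia].
  have agj : forall w', agree m w w' -> w' j = w j.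
    by move=> w' hw'; apply: hw'.
  apply: (IHm (r - (k+k)) w); try lia.
  - move=> w' hw' hs.
    apply: Hcl (ag _ hw') _; rewrite sumS.
    have hmu' : minn (w' j) (n - 1 - w' j) = k by rewrite agj.
    have := line k w' (ag _ hw') hmu' IHk; lia.
  - move=> w' hw' [t [ht hs]].
    apply: Hin (ag _ hw') _.
    exists (fun i => if i == j then (nat_of_ord (w j) != k) else t i); split.
      move=> i i' e0 e1.
      have -> : (i == j) = false by apply/negbTE/eqP => e; rewrite e /= in e0; lia.
      have -> : (i' == j) = false by apply/negbTE/eqP => e; rewrite e /= in e1; lia.
      exact: ht.
    rewrite sumS eqxx.
    rewrite (eq_bigr (fun i => refln (t i) (w' i))); last first.
      move=> i hi; have -> : (i == j) = false; last by [].
      by apply/negbTE/eqP => e; rewrite e /= in hi; lia.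
    have hjt : refln (nat_of_ord (w j) != k) (w' j) = k.
      rewrite /refln agj //; case: (boolP (nat_of_ord (w j) == k)) => /= e.
        by move/eqP: e.
      have := ltn_ord (w j); lia.
    rewrite hjt.
    have hu : uphalf (r - (k + k)) + k = uphalf r by rewrite !uphalfE -!divn2; lia.
    rewrite -hu ltn_add2r; exact: hs.
apply: (claim n) => //.
have := ltn_ord (v j); lia.
Qed.

Lemma Gall m : 2 <= d -> 2 <= m -> m <= d -> Gstmt m.
Proof.
elim: m => [|m IH] // hd hm hmd.
case: (ltnP m 2) => h.
  have -> : m.+1 = 2 by lia.
  exact: G2.
apply: Gstep => //; apply: IH => //; lia.
Qed.

End G.


Theorem lemma4p1 (n r d : nat) :
  0 < n -> 0 < r -> 0 < d -> r + 1 <= n -> 2 <= d ->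
  percolating r (calA n d r).
Proof.
move=> hn hr hd hrn hd2.
have [S [hAS hcl hSit]] := closure_set r (calA n d r).
move=> v; apply: hSit.
apply: (@Gall n d S d hd2 hd2 (leqnn d) r v hr hrn).
- move=> w _ hs; apply: hcl; apply: leq_trans hs _.
  apply: leq_trans (nb_count S w).
  rewrite /lc (eq_bigl (fun _ => true)) //; move=> i; exact: ltn_ord.
- move=> w _ [t [ht hs]]; apply: (subsetP hAS).
  rewrite /calA; apply/bigcupP; exists [ffun i => t i].
    rewrite /Tset in_set; apply/forallP => i; apply/forallP => j.
    apply/implyP => /andP [/eqP h0 /eqP h1]; rewrite !ffunE; apply/eqP; exact: ht.
  rewrite /refl_set in_set; apply/existsP; exists (reflect_by [ffun i => t i] w).
  rewrite /A_rd in_set; apply/andP; split.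
    rewrite (eq_bigr (fun i => refln (t i) (w i))); last first.
      move=> i _; rewrite /reflect_by !ffunE /refln; case: (t i) => //=.
      have := ltn_ord (w i); lia.
    rewrite (eq_bigl (fun _ => true)) in hs; last by move=> i; exact: ltn_ord.
    have hc : 0 < uphalf r by rewrite uphalfE -divn2; lia.
    by rewrite -ltnS subn1 prednK.
  apply/eqP/ffunP => i; rewrite /reflect_by !ffunE; case: (t i) => //.
  by rewrite rev_ordK.
Qed.
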